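(* For all even integers $n\ge2$ and real numbers $a\ge1$, $x,y\in(0,\pi)$, we have $\Theta_{n,a}(x,y)\ge 2\sin(x)\sin(y)\bigl(1+\cos(x)\cos(y)\bigr)$. Equality holds if and only if $n=2$, $a=1$.
   Context: For a real number $a$ and integers $0\le m$, $\binom{m+a}{m}=\frac{(a+1)(a+2)\cdots(a+m)}{m!}$ (equal to $1$ when $m=0$). For an integer $n\ge1$, $\Theta_{n,a}(x,y)=\sum_{j=1}^n\binom{n+a-j}{n-j}\frac{\sin(jx)\sin(jy)}{j}$. *)

(* Defs.v *)
From Stdlib Require Import Reals Arith Factorial.
Open Scope R_scope.

(* binom_shift m a = binom(m+a, m) = (a+1)(a+2)...(a+m) / m!  (= 1 for m = 0) *)
Fixpoint rising_prod (m : nat) (a : R) : R :=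
  match m with
  | O => 1
  | S k => rising_prod k a * (a + INR (S k))
  end.

Definition binom_shift (m : nat) (a : R) : R := rising_prod m a / INR (fact m).

Definition Theta (n : nat) (a x y : R) : R :=
  sum_f_R0 (fun i => let j := S i in
     binom_shift (n - j) a * (sin (INR j * x) * sin (INR j * y)) / INR j) (n - 1).

(* Main.v *)
Require Import Defs.
From Stdlib Require Import Reals Arith Lra Lia.
From Coquelicot Require Import Coquelicot.
Open Scope R_scope.
Lemma sum_pad (f : nat -> R) N M : (N <= M)%nat ->
  (forall i, (N < i <= M)%nat -> f i = 0) -> sum_f_R0 f M = sum_f_R0 f N.
Proof.
  intros H; induction H as [|M HM IH]; intros Hz; [reflexivity|].
  simpl. rewrite IH by (intros; apply Hz; lia). rewrite (Hz (S M)) by lia. ring.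
Qed.

Lemma sum_S (f : nat -> R) N : sum_f_R0 f (S N) = sum_f_R0 f N + f (S N).
Proof. reflexivity. Qed.

Lemma sum_swap (A : nat -> nat -> R) N K :
  sum_f_R0 (fun i => sum_f_R0 (fun k => A i k) K) N =
  sum_f_R0 (fun k => sum_f_R0 (fun i => A i k) N) K.
Proof.
  induction K as [|K IH]; simpl; [reflexivity|].
  rewrite plus_sum, IH. reflexivity.
Qed.

Lemma sum_mulr (f : nat -> R) N r :
  sum_f_R0 f N * r = sum_f_R0 (fun k => f k * r) N.
Proof. induction N; simpl; [ring| rewrite <- IHN; ring]. Qed.

Lemma sum_mull (f : nat -> R) N r :
  r * sum_f_R0 f N = sum_f_R0 (fun k => r * f k) N.
Proof. induction N; simpl; [ring| rewrite <- IHN; ring]. Qed.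

Lemma rising_S m b : rising_prod (S m) b = (b + 1) * rising_prod m (b + 1).
Proof.
  induction m as [|m IH].
  - cbn [rising_prod]. change (INR 1) with 1. ring.
  - change (rising_prod (S (S m)) b) with (rising_prod (S m) b * (b + INR (S (S m)))).
    rewrite IH. change (rising_prod (S m) (b+1)) with (rising_prod m (b+1) * (b + 1 + INR (S m))).
    rewrite (S_INR (S m)). ring.
Qed.

Lemma binom_rec i b :
  binom_shift (S i) (b + 1) = binom_shift i (b + 1) + binom_shift (S i) b.
Proof.
  unfold binom_shift. rewrite (rising_S i b).
  change (rising_prod (S i) (b+1)) with (rising_prod i (b+1) * (b + 1 + INR (S i))).
  rewrite fact_simpl, mult_INR.
  assert (H1 := INR_fact_neq_0 i). assert (H2 : INR (S i) <> 0) by (apply not_0_INR; lia).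
  field. split; assumption.
Qed.

Lemma binom0 b : binom_shift 0 b = 1.
Proof. unfold binom_shift. simpl. field. Qed.

Lemma hockey i b : binom_shift i (b + 1) = sum_f_R0 (fun k => binom_shift k b) i.
Proof.
  induction i as [|i IH].
  - simpl. rewrite !binom0. reflexivity.
  - rewrite binom_rec, IH. reflexivity.
Qed.

Lemma conv_exact a p :
  sum_f_R0 (fun k => binom_shift k (a - 2) * INR (S p - k)) p = binom_shift p a.
Proof.
  induction p as [|p IH].
  - simpl. rewrite !binom0. ring.
  - rewrite sum_eq with (Bn := fun k => binom_shift k (a - 2) * INR (S p - k)
                                 + binom_shift k (a-2)).
    2:{ intros k Hk. replace (S (S p) - k)%nat with (S (S p - k)) by lia.
        rewrite S_INR. ring. }
    rewrite plus_sum, (sum_S (fun k => binom_shift k (a - 2) * INR (S p - k))).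
    replace (S p - S p)%nat with 0%nat by lia.
    rewrite IH.
    assert (Hh := hockey (S p) (a - 2)).
    replace (a - 2 + 1) with (a - 1) in Hh by ring.
    rewrite <- Hh.
    assert (Hr := binom_rec p (a - 1)). replace (a - 1 + 1) with a in Hr by ring.
    rewrite Hr. simpl. ring.
Qed.

Lemma conv a p M : (p <= M)%nat ->
  sum_f_R0 (fun k => binom_shift k (a - 2) * INR (S p - k)) M = binom_shift p a.
Proof.
  intros H. rewrite (sum_pad _ p M H). apply conv_exact.
  intros i Hi. replace (S p - i)%nat with 0%nat by lia. simpl; ring.
Qed.

Lemma rising_nonneg k b : -1 <= b -> 0 <= rising_prod k b.
Proof.
  intros Hb; induction k as [|k IH]; [simpl; lra|].
  change (rising_prod (S k) b) with (rising_prod k b * (b + INR (S k))).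
  apply Rmult_le_pos; auto. rewrite S_INR. assert (0 <= INR k) by apply pos_INR. lra.
Qed.

Lemma u_nonneg k a : 1 <= a -> 0 <= binom_shift k (a - 2).
Proof.
  intros Ha. unfold binom_shift. apply Rmult_le_pos.
  apply rising_nonneg; lra. left; apply Rinv_0_lt_compat, INR_fact_lt_0.
Qed.

Lemma u_one a : binom_shift 1 (a - 2) = a - 1.
Proof. unfold binom_shift. simpl. field. Qed.

Definition Qf (c : nat -> R) N x y := sum_f_R0 (fun i => c i * (sin (INR (S i) * x) * sin (INR (S i) * y)) / INR (S i)) N.
Definition Sf (c : nat -> R) N t := sum_f_R0 (fun i => c i * sin (INR (S i) * t)) N.
Definition Cf (c : nat -> R) N t := sum_f_R0 (fun i => c i * cos (INR (S i) * t) / INR (S i)) N.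



Lemma INRS_neq0 i : INR (S i) <> 0.
Proof. apply not_0_INR; lia. Qed.

Lemma Q_C c N x y : Qf c N x y = (Cf c N (x - y) - Cf c N (x + y)) / 2.
Proof.
  unfold Qf, Cf.
  transitivity (sum_f_R0 (fun i => (c i * cos (INR (S i) * (x - y)) / INR (S i) -
     c i * cos (INR (S i) * (x + y)) / INR (S i)) * / 2) N).
  - apply sum_eq. intros i _.
    rewrite Rmult_minus_distr_l, Rmult_plus_distr_l, cos_minus, cos_plus.
    field. apply INRS_neq0.
  - rewrite <- sum_mulr, minus_sum. reflexivity.
Qed.

Lemma C_even c N s : Cf c N (- s) = Cf c N s.
Proof.
  unfold Cf. apply sum_eq. intros i _.
  replace (INR (S i) * - s) with (- (INR (S i) * s)) by ring. rewrite cos_neg. reflexivity.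
Qed.

Lemma C_per c N s : Cf c N (2 * PI - s) = Cf c N s.
Proof.
  unfold Cf. apply sum_eq. intros i _.
  replace (INR (S i) * (2 * PI - s)) with (- (INR (S i) * s) + 2 * INR (S i) * PI) by ring.
  rewrite cos_period, cos_neg. reflexivity.
Qed.

Lemma C_deriv c N t : derivable_pt_lim (Cf c N) t (- Sf c N t).
Proof.
  apply is_derive_Reals. unfold Cf, Sf. induction N as [|N IH].
  - cbn [sum_f_R0]. auto_derive; [auto|]. change (INR 1) with 1. field.
  - replace (- sum_f_R0 (fun i : nat => c i * sin (INR (S i) * t)) (S N))
     with ((- sum_f_R0 (fun i : nat => c i * sin (INR (S i) * t)) N) + (- (c (S N) * sin (INR (S (S N)) * t))))
     by (rewrite sum_S; ring).
    apply (is_derive_ext (fun t => sum_f_R0 (fun i : nat => c i * cos (INR (S i) * t) / INR (S i)) N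
            + c (S N) * cos (INR (S (S N)) * t) / INR (S (S N)))).
    { intros; rewrite sum_S; reflexivity. }
    apply (is_derive_plus (fun t => sum_f_R0 (fun i : nat => c i * cos (INR (S i) * t) / INR (S i)) N)
            (fun t => c (S N) * cos (INR (S (S N)) * t) / INR (S (S N)))); [exact IH|].
    assert (Hk := INRS_neq0 (S N)). set (k := INR (S (S N))) in *. auto_derive; [auto|]. field. exact Hk.
Qed.

Lemma C_dec_weak c N u v : 0 <= u -> u < v -> v <= PI ->
  (forall t, 0 < t < PI -> 0 <= Sf c N t) -> Cf c N v <= Cf c N u.
Proof.
  intros H0 Huv Hv HS.
  destruct (MVT_cor2 (Cf c N) (fun t => - Sf c N t) u v Huv) as [z [Hz1 Hz2]].
  { intros; apply C_deriv. }
  assert (0 <= Sf c N z) by (apply HS; lra).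
  assert (0 <= Sf c N z * (v - u)) by (apply Rmult_le_pos; lra).
  lra.
Qed.

Lemma C_dec_open c N u v : 0 <= u -> u < v -> v <= PI ->
  (forall t, u < t < v -> 0 < Sf c N t) -> Cf c N v < Cf c N u.
Proof.
  intros H0 Huv Hv HS.
  destruct (MVT_cor2 (Cf c N) (fun t => - Sf c N t) u v Huv) as [z [Hz1 Hz2]].
  { intros; apply C_deriv. }
  assert (0 < Sf c N z) by (apply HS; lra).
  assert (0 < Sf c N z * (v - u)) by (apply Rmult_lt_0_compat; lra).
  lra.
Qed.

Lemma C_dec_strict c N u v : 0 <= u -> u < v -> v <= PI ->
  (forall t, 0 < t < PI -> t <> PI / 2 -> 0 < Sf c N t) -> Cf c N v < Cf c N u.
Proof.
  intros H0 Huv Hv HS.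
  destruct (Rle_or_lt v (PI/2)) as [H1|H1].
  - apply C_dec_open; auto. intros t Ht; apply HS; lra.
  - destruct (Rle_or_lt (PI/2) u) as [H2|H2].
    + apply C_dec_open; auto. intros t Ht; apply HS; lra.
    + apply Rlt_trans with (Cf c N (PI/2)).
      * apply C_dec_open; auto; try lra. intros t Ht; apply HS; lra.
      * apply C_dec_open; auto; try lra. intros t Ht; apply HS; lra.
Qed.

Lemma reduce c N x y : 0 < x < PI -> 0 < y < PI ->
  exists u v, 0 <= u /\ u < v /\ v <= PI /\
    Qf c N x y = (Cf c N u - Cf c N v) / 2.
Proof.
  intros Hx Hy. rewrite Q_C.
  assert (Hu : exists u, 0 <= u /\ u < x + y /\ u < 2 * PI - (x + y) /\ Cf c N (x - y) = Cf c N u).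
  { destruct (Rle_or_lt y x).
    - exists (x - y). repeat split; lra.
    - exists (y - x). repeat split; try lra. rewrite <- C_even. f_equal; ring. }
  destruct Hu as [u [Hu1 [Hu2 [Hu3 Hu4]]]]. rewrite Hu4.
  destruct (Rle_or_lt (x + y) PI).
  - exists u, (x + y). repeat split; lra.
  - exists u, (2 * PI - (x + y)). repeat split; try lra.
    rewrite C_per. reflexivity.
Qed.

Lemma Q_nonneg c N x y : 0 < x < PI -> 0 < y < PI ->
  (forall t, 0 < t < PI -> 0 <= Sf c N t) -> 0 <= Qf c N x y.
Proof.
  intros Hx Hy HS. destruct (reduce c N x y Hx Hy) as [u [v [H1 [H2 [H3 H4]]]]].
  rewrite H4. assert (Cf c N v <= Cf c N u) by (apply C_dec_weak; auto). lra.
Qed.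

Lemma Q_pos c N x y : 0 < x < PI -> 0 < y < PI ->
  (forall t, 0 < t < PI -> t <> PI / 2 -> 0 < Sf c N t) -> 0 < Qf c N x y.
Proof.
  intros Hx Hy HS. destruct (reduce c N x y Hx Hy) as [u [v [H1 [H2 [H3 H4]]]]].
  rewrite H4. assert (Cf c N v < Cf c N u) by (apply C_dec_strict; auto). lra.
Qed.

Lemma sin_bound p t : 0 <= sin t -> Rabs (sin (INR p * t)) <= INR p * sin t.
Proof.
  intros Hs. induction p as [|p IH].
  - simpl. rewrite Rmult_0_l, sin_0, Rabs_R0. lra.
  - rewrite S_INR. replace ((INR p + 1) * t) with (INR p * t + t) by ring.
    rewrite sin_plus.
    assert (Hc := COS_bound t). assert (Hc2 := COS_bound (INR p * t)).
    eapply Rle_trans; [apply Rabs_triang|]. rewrite !Rabs_mult.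
    assert (Rabs (cos t) <= 1) by (apply Rabs_le; lra).
    assert (Rabs (cos (INR p * t)) <= 1) by (apply Rabs_le; lra).
    rewrite (Rabs_right (sin t)) by lra.
    assert (Rabs (sin (INR p * t)) * Rabs (cos t) <= Rabs (sin (INR p * t)))
      by (rewrite <- (Rmult_1_r (Rabs (sin (INR p * t)))) at 2; apply Rmult_le_compat_l; [apply Rabs_pos|lra]).
    assert (Rabs (cos (INR p * t)) * sin t <= sin t)
      by (rewrite <- (Rmult_1_l (sin t)) at 2; apply Rmult_le_compat_r; lra).
    lra.
Qed.

Lemma cos_lt1 t : 0 < t < PI -> Rabs (cos t) < 1.
Proof.
  intros Ht. assert (Hs : 0 < sin t) by (apply sin_gt_0; lra).
  assert (H := sin2_cos2 t). unfold Rsqr in H.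
  apply Rsqr_lt_abs_1 in H || idtac.
  destruct (Rle_or_lt 1 (Rabs (cos t))) as [H1|H1]; [|exact H1].
  exfalso. assert (1 <= Rabs (cos t) * Rabs (cos t)) by nra.
  rewrite <- Rabs_mult in H0. rewrite Rabs_right in H0 by nra. nra.
Qed.

Lemma sin_bound_strict p t : (2 <= p)%nat -> 0 < t < PI -> Rabs (sin (INR p * t)) < INR p * sin t.
Proof.
  intros Hp Ht. assert (Hs : 0 < sin t) by (apply sin_gt_0; lra).
  destruct p as [|p]; [lia|].
  rewrite S_INR. replace ((INR p + 1) * t) with (INR p * t + t) by ring.
  rewrite sin_plus.
  assert (Hc := cos_lt1 t Ht). assert (Hc2 := COS_bound (INR p * t)).
  assert (IH := sin_bound p t (Rlt_le _ _ Hs)).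
  assert (Hpp : 1 <= INR p) by (apply (le_INR 1); lia).
  eapply Rle_lt_trans; [apply Rabs_triang|]. rewrite !Rabs_mult.
  assert (Rabs (cos (INR p * t)) <= 1) by (apply Rabs_le; lra).
  rewrite (Rabs_right (sin t)) by lra.
  assert (Rabs (sin (INR p * t)) * Rabs (cos t) < INR p * sin t).
  { destruct (Req_dec (Rabs (sin (INR p * t))) 0) as [E|E].
    - rewrite E. nra.
    - assert (0 < Rabs (sin (INR p * t))) by (assert (H0 := Rabs_pos (sin (INR p * t))); lra).
      assert (Rabs (sin (INR p * t)) * Rabs (cos t) < Rabs (sin (INR p * t))).
      { rewrite <- (Rmult_1_r (Rabs (sin (INR p * t)))) at 2. apply Rmult_lt_compat_l; lra. }
      lra. }
  assert (Rabs (cos (INR p * t)) * sin t <= sin t)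
    by (rewrite <- (Rmult_1_l (sin t)) at 2; apply Rmult_le_compat_r; lra).
  lra.
Qed.

Definition Qsum m t := sum_f_R0 (fun i => sin (INR (S i) * t)) m.

Lemma sin_step w t : (2 - 2 * cos t) * sin w = 2 * sin w - sin (w + t) - sin (w - t).
Proof. rewrite sin_plus, sin_minus. ring. Qed.

Lemma Qsum_closed m t :
  (2 - 2 * cos t) * Qsum m t = sin t + sin (INR (S m) * t) - sin (INR (S (S m)) * t).
Proof.
  unfold Qsum. induction m as [|m IH].
  - cbn [sum_f_R0]. change (INR 1) with 1. replace (INR 2) with 2 by (simpl; ring).
    replace (2 * t) with (1 * t + t) by ring. rewrite Rmult_1_l, sin_plus. ring.
  - rewrite sum_S, Rmult_plus_distr_l, IH, sin_step.
    replace (INR (S (S m)) * t + t) with (INR (S (S (S m))) * t) by (rewrite (S_INR (S (S m))); ring).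
    replace (INR (S (S m)) * t - t) with (INR (S m) * t) by (rewrite (S_INR (S m)); ring).
    ring.
Qed.

Definition Kc (m : nat) : nat -> R := fun i => INR (m - i).
Definition T m t := Sf (Kc m) m t.

Lemma T_closed m t : (2 - 2 * cos t) * T m t = INR (S m) * sin t - sin (INR (S m) * t).
Proof.
  unfold T, Sf, Kc. induction m as [|m IH].
  - cbn [sum_f_R0]. simpl (0 - 0)%nat. change (INR 0) with 0. change (INR 1) with 1. rewrite Rmult_1_l. ring.
  - rewrite sum_S. replace (S m - S m)%nat with 0%nat by lia.
    rewrite (sum_eq _ (fun i => INR (m - i) * sin (INR (S i) * t) + sin (INR (S i) * t))).
    2:{ intros i Hi. replace (S m - i)%nat with (S (m - i)) by lia. rewrite S_INR. ring. }
    rewrite plus_sum. change (sum_f_R0 (fun i => sin (INR (S i) * t)) m) with (Qsum m t).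
    change (INR 0) with 0.
    replace ((2 - 2 * cos t) * (sum_f_R0 (fun i : nat => INR (m - i) * sin (INR (S i) * t)) m + Qsum m t + 0 * sin (INR (S (S m)) * t)))
      with ((2 - 2 * cos t) * sum_f_R0 (fun i : nat => INR (m - i) * sin (INR (S i) * t)) m + (2 - 2 * cos t) * Qsum m t) by ring.
    rewrite IH, Qsum_closed. rewrite (S_INR (S m)). ring.
Qed.

Lemma SK m N t : (m <= S N)%nat -> Sf (Kc m) N t = T m t.
Proof.
  intros H. unfold T, Sf, Kc.
  destruct (Nat.le_gt_cases m N).
  - apply sum_pad; auto. intros i Hi. replace (m - i)%nat with 0%nat by lia. simpl; ring.
  - assert (m = S N) by lia. subst m. symmetry.
    rewrite sum_S. replace (S N - S N)%nat with 0%nat by lia. simpl (INR 0). ring.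
Qed.

Lemma den_pos t : 0 < t < PI -> 0 < 2 - 2 * cos t.
Proof. intros Ht. assert (H := cos_lt1 t Ht). apply Rabs_def2 in H. lra. Qed.

Lemma T_nonneg m t : 0 < t < PI -> 0 <= T m t.
Proof.
  intros Ht. assert (Hd := den_pos t Ht). assert (Hs : 0 < sin t) by (apply sin_gt_0; lra).
  assert (Hb := sin_bound (S m) t (Rlt_le _ _ Hs)).
  assert (Hc := T_closed m t).
  assert (H1 : sin (INR (S m) * t) <= Rabs (sin (INR (S m) * t))) by apply RRle_abs.
  assert (0 <= (2 - 2 * cos t) * T m t) by lra.
  destruct (Rle_or_lt 0 (T m t)); auto. nra.
Qed.

Lemma T_pos m t : (1 <= m)%nat -> 0 < t < PI -> 0 < T m t.
Proof.
  intros Hm Ht. assert (Hd := den_pos t Ht). assert (Hs : 0 < sin t) by (apply sin_gt_0; lra).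
  assert (Hb := sin_bound_strict (S m) t ltac:(lia) Ht).
  assert (Hc := T_closed m t).
  assert (H1 : sin (INR (S m) * t) <= Rabs (sin (INR (S m) * t))) by apply RRle_abs.
  assert (0 < (2 - 2 * cos t) * T m t) by lra.
  destruct (Rle_or_lt (T m t) 0); auto. nra.
Qed.

Lemma INR3 : INR 3 = 3. Proof. simpl. ring. Qed.

Lemma D1_closed p t : (2 - 2 * cos t) * (T (2 * p + 2) t - T 2 t) =
   2 * INR p * sin t - 2 * cos (INR (p + 3) * t) * sin (INR p * t).
Proof.
  rewrite Rmult_minus_distr_l, !T_closed.
  replace (INR (S (2 * p + 2))) with (2 * INR p + 3) by (rewrite S_INR, plus_INR, mult_INR; simpl; ring).
  replace (INR 3) with 3 by (simpl; ring).
  replace ((2 * INR p + 3) * t) with (INR (p + 3) * t + INR p * t) by (rewrite plus_INR, INR3; ring).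
  replace (3 * t) with (INR (p + 3) * t - INR p * t) by (rewrite plus_INR, INR3; ring).
  rewrite sin_plus, sin_minus. ring.
Qed.

Lemma D1_nonneg p t : 0 < t < PI -> 0 <= T (2 * p + 2) t - T 2 t.
Proof.
  intros Ht. assert (Hd := den_pos t Ht). assert (Hs : 0 < sin t) by (apply sin_gt_0; lra).
  assert (Hc := D1_closed p t).
  assert (Hb := sin_bound p t (Rlt_le _ _ Hs)).
  assert (H1 : cos (INR (p + 3) * t) * sin (INR p * t) <= Rabs (sin (INR p * t))).
  { eapply Rle_trans; [apply RRle_abs|]. rewrite Rabs_mult.
    assert (Rabs (cos (INR (p + 3) * t)) <= 1) by (apply Rabs_le; apply COS_bound).
    rewrite <- (Rmult_1_l (Rabs (sin (INR p * t)))) at 2. apply Rmult_le_compat_r; [apply Rabs_pos| lra]. }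
  assert (0 <= (2 - 2 * cos t) * (T (2 * p + 2) t - T 2 t)) by lra.
  destruct (Rle_or_lt 0 (T (2 * p + 2) t - T 2 t)); auto. nra.
Qed.

Lemma cos4_lt1 t : 0 < t < PI -> t <> PI / 2 -> cos (4 * t) < 1.
Proof.
  intros Ht Hne. assert (Hs : 0 < sin t) by (apply sin_gt_0; lra).
  assert (Hc : cos t <> 0).
  { intros E. apply Hne. apply cos_inj; try lra. rewrite cos_PI2. exact E. }
  replace (4 * t) with (2 * (2 * t)) by ring. rewrite cos_2a_sin, sin_2a.
  assert (0 < sin t * cos t * (sin t * cos t)).
  { assert (sin t * cos t <> 0) by (apply Rmult_integral_contrapositive; split; lra).
    apply (Rsqr_pos_lt (sin t * cos t)); auto. }
  nra.
Qed.

Lemma D1_pos p t : (1 <= p)%nat -> 0 < t < PI -> t <> PI / 2 -> 0 < T (2 * p + 2) t - T 2 t.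
Proof.
  intros Hp Ht Hne. assert (Hd := den_pos t Ht). assert (Hs : 0 < sin t) by (apply sin_gt_0; lra).
  assert (Hc := D1_closed p t).
  assert (0 < (2 - 2 * cos t) * (T (2 * p + 2) t - T 2 t)).
  { rewrite Hc.
    destruct (Nat.eq_dec p 1) as [E|E].
    - subst p. change (INR 1) with 1. replace (INR (1 + 3)) with 4 by (simpl; ring).
      rewrite Rmult_1_l. assert (H4 := cos4_lt1 t Ht Hne). nra.
    - assert (Hb := sin_bound_strict p t ltac:(lia) Ht).
      assert (H1 : cos (INR (p + 3) * t) * sin (INR p * t) <= Rabs (sin (INR p * t))).
      { eapply Rle_trans; [apply RRle_abs|]. rewrite Rabs_mult.
        assert (Rabs (cos (INR (p + 3) * t)) <= 1) by (apply Rabs_le; apply COS_bound).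
        rewrite <- (Rmult_1_l (Rabs (sin (INR p * t)))) at 2. apply Rmult_le_compat_r; [apply Rabs_pos| lra]. }
      lra. }
  destruct (Rle_or_lt (T (2 * p + 2) t - T 2 t) 0); auto. nra.
Qed.

Lemma sum_ge_first (f : nat -> R) N : (forall i, (i <= N)%nat -> 0 <= f i) -> f 0%nat <= sum_f_R0 f N.
Proof.
  induction N as [|N IH]; intros H; [simpl; lra|].
  rewrite sum_S. assert (0 <= f (S N)) by (apply H; lia).
  assert (f 0%nat <= sum_f_R0 f N) by (apply IH; intros; apply H; lia). lra.
Qed.

Lemma sum_nonneg (f : nat -> R) N : (forall i, (i <= N)%nat -> 0 <= f i) -> 0 <= sum_f_R0 f N.
Proof.
  intros H. eapply Rle_trans; [apply (H 0%nat); lia|]. apply sum_ge_first; auto.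
Qed.

Lemma Theta_conv n a x y : (1 <= n)%nat ->
  Theta n a x y = sum_f_R0 (fun k => binom_shift k (a - 2) * Qf (Kc (n - k)) (n - 1) x y) (n - 1).
Proof.
  intros Hn. unfold Theta. cbv zeta.
  transitivity (sum_f_R0 (fun i => sum_f_R0 (fun k => binom_shift k (a - 2) *
     (Kc (n - k) i * (sin (INR (S i) * x) * sin (INR (S i) * y)) / INR (S i))) (n - 1)) (n - 1)).
  - apply sum_eq; intros i Hi. rewrite <- (conv a (n - S i) (n - 1)) by lia.
    unfold Rdiv. rewrite Rmult_assoc, sum_mulr. apply sum_eq; intros k Hk.
    unfold Kc. replace (n - k - i)%nat with (S (n - S i) - k)%nat by lia. ring.
  - rewrite sum_swap. apply sum_eq; intros k _. unfold Qf. rewrite sum_mull. reflexivity.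
Qed.

Lemma Qf_minus c d N x y : Qf (fun i => c i - d i) N x y = Qf c N x y - Qf d N x y.
Proof.
  unfold Qf. rewrite <- minus_sum. apply sum_eq; intros i _. field. apply INRS_neq0.
Qed.

Lemma Sf_minus c d N t : Sf (fun i => c i - d i) N t = Sf c N t - Sf d N t.
Proof.
  unfold Sf. rewrite <- minus_sum. apply sum_eq; intros i _. ring.
Qed.

Lemma RHS_eq N x y : (1 <= N)%nat -> Qf (Kc 2) N x y = 2 * sin x * sin y * (1 + cos x * cos y).
Proof.
  intros HN. unfold Qf. rewrite (sum_pad _ 1 N HN).
  2:{ intros i Hi. unfold Kc. replace (2 - i)%nat with 0%nat by lia. simpl. field. apply INRS_neq0. }
  cbn [sum_f_R0]. unfold Kc. simpl (2 - 0)%nat. simpl (2 - 1)%nat.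
  change (INR 1) with 1. replace (INR 2) with 2 by (simpl; ring).
  rewrite !Rmult_1_l, !sin_2a. field.
Qed.

Theorem theorem3p8 :
  forall (n : nat) (a x y : R),
    Nat.Even n -> (2 <= n)%nat -> 1 <= a ->
    0 < x < PI -> 0 < y < PI ->
    Theta n a x y >= 2 * sin x * sin y * (1 + cos x * cos y) /\
    (Theta n a x y = 2 * sin x * sin y * (1 + cos x * cos y) <-> (n = 2%nat /\ a = 1)).
Proof.
  intros n a x y [m Hm] Hn Ha Hx Hy.
  set (p := (m - 1)%nat).
  assert (Hnp : n = (2 * p + 2)%nat) by (unfold p; lia).
  set (D1 := Qf (fun i => Kc n i - Kc 2 i) (n - 1) x y).
  set (D2 := sum_f_R0 (fun k => binom_shift (S k) (a - 2) * Qf (Kc (n - S k)) (n - 1) x y) (n - 2)).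
  assert (Hdec : Theta n a x y - 2 * sin x * sin y * (1 + cos x * cos y) = D1 + D2).
  { rewrite Theta_conv by lia. rewrite decomp_sum by lia.
    rewrite <- (RHS_eq (n - 1) x y) by lia. unfold D1, D2. rewrite Qf_minus, binom0.
    replace (Init.Nat.pred (n - 1)) with (n - 2)%nat by lia.
    replace (n - 0)%nat with n by lia. ring. }
  assert (HS1 : forall t, 0 < t < PI -> Sf (fun i => Kc n i - Kc 2 i) (n - 1) t = T n t - T 2 t).
  { intros t Ht. rewrite Sf_minus, !SK by lia. reflexivity. }
  assert (HD1 : 0 <= D1).
  { apply Q_nonneg; auto. intros t Ht. rewrite HS1 by auto. rewrite Hnp. apply D1_nonneg; auto. }
  assert (HD1s : (1 <= p)%nat -> 0 < D1).
  { intros Hp. apply Q_pos; auto. intros t Ht Hne. rewrite HS1 by auto. rewrite Hnp. apply D1_pos; auto. }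
  assert (HQ : forall k, (k <= n - 2)%nat -> 0 <= Qf (Kc (n - S k)) (n - 1) x y).
  { intros k Hk. apply Q_nonneg; auto. intros t Ht. rewrite SK by lia. apply T_nonneg; auto. }
  assert (HD2 : 0 <= D2).
  { apply sum_nonneg. intros k Hk. apply Rmult_le_pos; [apply u_nonneg; auto| apply HQ; auto]. }
  assert (HD2s : 1 < a -> 0 < D2).
  { intros Ha1. eapply Rlt_le_trans; [|apply sum_ge_first].
    - rewrite u_one. apply Rmult_lt_0_compat; [lra|].
      apply Q_pos; auto. intros t Ht _. rewrite SK by lia. apply T_pos; auto; lia.
    - intros k Hk. apply Rmult_le_pos; [apply u_nonneg; auto| apply HQ; auto]. }
  split; [lra|]. split.
  - intros E. assert (D1 + D2 = 0) by lra.
    split.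
    + destruct (Nat.eq_dec p 0) as [E0|E0]; [lia|]. assert (0 < D1) by (apply HD1s; lia). lra.
    + destruct (Req_dec a 1) as [E1|E1]; auto. assert (0 < D2) by (apply HD2s; lra). lra.
  - intros [E1 E2]. subst a.
    assert (D1 = 0).
    { unfold D1. rewrite Qf_minus, E1. ring. }
    assert (D2 = 0).
    { unfold D2. rewrite E1. simpl (2 - 2)%nat. cbn [sum_f_R0].
      unfold binom_shift. rewrite rising_S. replace (1 - 2 + 1) with 0 by ring. unfold Rdiv. rewrite !Rmult_0_l. reflexivity. }
    lra.
Qed.
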